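(* For the BDSSEP with parameters $0<\alpha\le\beta<1$ on $\Omega_N=\{0,1\}^{\{1,\dots,N-1\}}$, the mixing time satisfies $T^{\rm mix}_N\le \frac12 N^3$ for every $N\ge2$.
   Context: The BDSSEP is the continuous-time Markov chain on $\Omega_N$ with generator $$(L_Nf)(\eta)=\tfrac12\sum_{x=1}^{N-2}[f(\sigma^{x,x+1}\eta)-f(\eta)]+\tfrac12\{\alpha[1-\eta(1)]+(1-\alpha)\eta(1)\}[f(\sigma^1\eta)-f(\eta)]+\tfrac12\{\beta[1-\eta(N-1)]+(1-\beta)\eta(N-1)\}[f(\sigma^{N-1}\eta)-f(\eta)],$$ where $\sigma^{x,x+1}\eta$ exchanges $\eta(x),\eta(x+1)$ and $\sigma^x\eta$ flips $\eta(x)$; $\nu^N_{\alpha,\beta}$ is its stationary distribution. With $P_t(\eta,\xi)=\mathbb P_\eta[\eta(t)=\xi]$, $T^{\rm mix}_N=\inf\{t>0:\max_{\eta}\|P_t(\eta,\cdot)-\nu^N_{\alpha,\beta}\|_{\rm TV}\le1/4\}$. *)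

(* Defs.v *)
From HB Require Import structures.
From mathcomp Require Import all_boot all_order all_algebra.
From mathcomp Require Import all_classical all_reals all_analysis.
Set Implicit Arguments. Unset Strict Implicit. Unset Printing Implicit Defensive.
Import Order.TTheory GRing.Theory Num.Theory.
Local Open Scope classical_set_scope.
Local Open Scope ring_scope.

(* Configurations: Omega_N = {0,1}^{1,...,N-1}; site x (1 <= x <= N-1) is the
   ordinal x-1 of 'I_(N.-1). *)
Definition config (N : nat) := {ffun 'I_N.-1 -> bool}.

Definition occ N (eta : config N) (x : nat) : bool :=
  match @insub _ (fun i => i < N.-1)%N _ x.-1 with
  | Some i => eta i | None => false end.

Definition swap N (eta : config N) (x : nat) : config N :=
  [ffun i : 'I_N.-1 => if (val i).+1 == x then occ eta x.+1
                      else if (val i).+1 == x.+1 then occ eta x else eta i].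

Definition flip N (eta : config N) (x : nat) : config N :=
  [ffun i : 'I_N.-1 => if (val i).+1 == x then ~~ eta i else eta i].

Definition b2R (R : realType) (b : bool) : R := (b : nat)%:R.

Definition genL (R : realType) N (alpha beta : R) (f : config N -> R)
  (eta : config N) : R :=
  2^-1 * (\sum_(1 <= x < N.-1) (f (swap eta x) - f eta))
  + 2^-1 * (alpha * (1 - b2R R (occ eta 1)) + (1 - alpha) * b2R R (occ eta 1))
         * (f (flip eta 1) - f eta)
  + 2^-1 * (beta * (1 - b2R R (occ eta N.-1)) + (1 - beta) * b2R R (occ eta N.-1))
         * (f (flip eta N.-1) - f eta).

Definition indic (R : realType) N (xi : config N) : config N -> R :=
  fun eta => b2R R (eta == xi).

(* P_t(eta, xi) = (e^{t L_N} 1_xi)(eta) = sum_k t^k/k! (L_N^k 1_xi)(eta) *)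
Definition Pt (R : realType) N (alpha beta : R) (t : R)
  (eta xi : config N) : R :=
  limn (fun n => \sum_(0 <= k < n)
     (t ^+ k / (k`!)%:R * iter k (genL alpha beta) (indic R xi) eta)).

Definition stationary (R : realType) N (alpha beta : R) (nu : config N -> R) :=
  [/\ forall xi, 0 <= nu xi, \sum_xi nu xi = 1 &
      forall f : config N -> R, \sum_eta nu eta * genL alpha beta f eta = 0].

Definition tv_dist (R : realType) N (mu nu : config N -> R) : R :=
  2^-1 * \sum_xi `|mu xi - nu xi|.

Definition max_tv (R : realType) N (alpha beta : R) (nu : config N -> R)
  (t : R) : R :=
  \big[Num.max/0]_(eta : config N) tv_dist (Pt alpha beta t eta) nu.

Definition Tmix_set (R : realType) N (alpha beta : R) (nu : config N -> R) :
  set R := [set t | 0 < t /\ max_tv alpha beta nu t <= 4^-1].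

Definition Tmix (R : realType) N (alpha beta : R) (nu : config N -> R) : R :=
  inf (Tmix_set alpha beta nu).

(* Main.v *)
Require Import Defs.
From HB Require Import structures.
From mathcomp Require Import all_boot all_order all_algebra.
From mathcomp Require Import all_classical all_reals all_analysis.
From mathcomp Require Import ring lra zify.
Import Order.TTheory GRing.Theory Num.Theory.
Local Open Scope classical_set_scope.
Local Open Scope ring_scope.

Module Helpers.
Set Implicit Arguments. Unset Strict Implicit. Unset Printing Implicit Defensive.
Import numFieldNormedType.Exports.
Section PartA.
Variable R : realType.

Lemma cvg_bigsum (I : Type) (r : seq I) (F : I -> nat -> R) (l : I -> R) :
  (forall i, (F i) @ \oo --> l i) ->
  (fun n => \sum_(i <- r) F i n) @ \oo --> \sum_(i <- r) l i.
Proof.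
move=> H; elim: r => [|i r IH].
  rewrite big_nil; under eq_fun do rewrite big_nil; exact: cvg_cst.
rewrite big_cons; under eq_fun do rewrite big_cons.
exact: cvgD.
Qed.

Lemma reindex_tri (F : nat -> nat -> R) n :
  \sum_(k < n) \sum_(j < k.+1) F j (k - j)%N = \sum_(j < n) \sum_(m < n - j) F j m.
Proof.
elim: n => [|n IH]; first by rewrite !big_ord0.
rewrite big_ord_recr /= IH.
rewrite [RHS]big_ord_recr /=.
have -> : \sum_(j < n) \sum_(m < n.+1 - j) F j m =
   \sum_(j < n) \sum_(m < n - j) F j m + \sum_(j < n) F j (n - j)%N.
  rewrite -big_split /=; apply: eq_bigr => j _.
  by rewrite subSn ?(ltnW (ltn_ord j)) // big_ord_recr.
rewrite -addrA; congr (_ + _).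
by rewrite big_ord_recr /= subSnn subnn big_ord1.
Qed.

Lemma diff_tri (F : nat -> nat -> R) n :
  \sum_(j < n) \sum_(m < n) F j m - \sum_(k < n) \sum_(j < k.+1) F j (k - j)%N
  = \sum_(j < n) \sum_(n - j <= m < n) F j m.
Proof.
rewrite reindex_tri -sumrB; apply: eq_bigr => j _.
rewrite -(big_mkord xpredT (F j)) -(big_mkord xpredT (F j)).
rewrite (@big_cat_nat _ _ _ (n - j)) ?leq_subr //=.
by rewrite addrAC subrr add0r.
Qed.

Lemma fact_binom k j : (j <= k)%N ->
  'C(k, j)%:R / k`!%:R = (j`!%:R)^-1 * ((k - j)`!%:R)^-1 :> R.
Proof.
move=> jk; rewrite -(bin_fact jk) natrM natrM.
have h1 : (j`!%:R : R) != 0 by rewrite pnatr_eq0 -lt0n fact_gt0.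
have h2 : ((k - j)`!%:R : R) != 0 by rewrite pnatr_eq0 -lt0n fact_gt0.
have h3 : ('C(k, j)%:R : R) != 0 by rewrite pnatr_eq0 -lt0n bin_gt0.
by rewrite invfM mulrA divff // mul1r invfM.
Qed.

Lemma exp_binom (a b : R) k :
  (a + b) ^+ k / k`!%:R =
  \sum_(j < k.+1) (a ^+ j / j`!%:R) * (b ^+ (k - j) / (k - j)`!%:R).
Proof.
rewrite addrC exprDn mulr_suml; apply: eq_bigr => j _.
have jk : (j <= k)%N by rewrite -ltnS.
rewrite -mulr_natr.
have := fact_binom jk => /(congr1 (fun z => a ^+ j * b ^+ (k - j) * z)).
rewrite /= => H.
transitivity (a ^+ j * b ^+ (k - j) * ('C(k, j)%:R / k`!%:R)); first by ring.
by rewrite H; ring.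
Qed.

Definition ecoef (a : R) (j : nat) := a ^+ j / j`!%:R.

Lemma ecoef_ge0 a j : 0 <= a -> 0 <= ecoef a j.
Proof. by move=> a0; rewrite /ecoef divr_ge0 ?exprn_ge0. Qed.

Lemma series_ecoef a n : series (exp_coeff a) n = \sum_(j < n) ecoef a j.
Proof. by rewrite /series /= big_mkord. Qed.

Lemma ecoef_cvg a : (fun n => \sum_(j < n) ecoef a j) @ \oo --> expR a.
Proof.
have := @is_cvg_series_exp_coeff R a.
rewrite /expR => /cvg_ex[l Hl].
have -> : (fun n => \sum_(j < n) ecoef a j) = series (exp_coeff a).
  by apply/funext => n; rewrite series_ecoef.
by move/cvg_lim: (Hl) => ->.
Qed.

Lemma abs_cvg (u : R ^nat) a M : 0 <= a ->
  (forall j, `|u j| <= M * ecoef a j) -> cvgn (series u).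
Proof.
move=> a0 Hu; apply: normed_cvg.
apply: (@series_le_cvg R _ (M *: exp_coeff a)).
- move=> n /=; exact: normr_ge0.
- move=> n; change (0 <= M * ecoef a n); exact: le_trans (normr_ge0 _) (Hu n).
- move=> n; change (`|u n| <= M * ecoef a n); exact: Hu.
apply: is_cvg_seriesZ; exact: is_cvg_series_exp_coeff.
Qed.

Lemma series_ord (u : R ^nat) n : series u n = \sum_(j < n) u j.
Proof. by rewrite /series /= big_mkord. Qed.

Lemma cauchy_prod (u v : R ^nat) a b M : 0 <= a -> 0 <= b ->
  (forall j, `|u j| <= M * ecoef a j) -> (forall m, `|v m| <= ecoef b m) ->
  (fun n => \sum_(k < n) \sum_(j < k.+1) u j * v (k - j)%N) @ \oo -->
    limn (series u) * limn (series v).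
Proof.
move=> a0 b0 Hu Hv.
have M0 : 0 <= M.
  have := Hu 0%N; rewrite /ecoef expr0 fact0 divr1 mulr1; exact: le_trans.
have cu : cvgn (series u) by apply: abs_cvg Hu.
have cv : cvgn (series v) by apply: (@abs_cvg _ b 1) => // m; rewrite mul1r.
pose P n := series u n * series v n.
pose C n := \sum_(k < n) \sum_(j < k.+1) u j * v (k - j)%N.
pose E n := (\sum_(j < n) ecoef a j) * (\sum_(j < n) ecoef b j)
             - \sum_(k < n) ecoef (a + b) k.
have PE n : P n - C n = \sum_(j < n) \sum_(n - j <= m < n) u j * v m.
  rewrite -(diff_tri (fun j m => u j * v m)) /P !series_ord mulr_suml; congr (_ - _).
  by apply: eq_bigr => j _; rewrite mulr_sumr.
have EE n : E n = \sum_(j < n) \sum_(n - j <= m < n) ecoef a j * ecoef b m.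
  rewrite -(diff_tri (fun j m => ecoef a j * ecoef b m)) /E mulr_suml; congr (_ - _).
    by apply: eq_bigr => j _; rewrite mulr_sumr.
  by apply: eq_bigr => k _; rewrite /ecoef exp_binom.
have bnd n : `|P n - C n| <= M * E n.
  rewrite PE EE mulr_sumr (le_trans (ler_norm_sum _ _ _)) //.
  apply: ler_sum => j _; rewrite mulr_sumr (le_trans (ler_norm_sum _ _ _)) //.
  apply: ler_sum => m _; rewrite normrM mulrA.
  apply: ler_pM => //; exact: Hv.
have Ecvg : E @ \oo --> 0.
  have -> : 0 = expR a * expR b - expR (a + b) :> R by rewrite expRD subrr.
  apply: cvgB; last exact: ecoef_cvg.
  apply: cvgM; exact: ecoef_cvg.
have PC0 : (fun n => P n - C n) @ \oo --> 0.
  apply: (@squeeze_cvgr _ _ _ _ (fun n => - (M * E n)) (fun n => M * E n)).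
  - by apply: nearW => n; rewrite -ler_norml bnd.
  - rewrite -oppr0 -(mulr0 M); apply: cvgN; apply: cvgMr; exact: Ecvg.
  - rewrite -(mulr0 M); apply: cvgMr; exact: Ecvg.
change (C @ \oo --> limn (series u) * limn (series v)).
have -> : C = (fun n => P n - (P n - C n)) by apply/funext => n; rewrite subKr.
rewrite -[X in _ --> X]subr0; apply: cvgB => //.
exact: cvgM.
Qed.

End PartA.

Section PartB.
Variables (R : realType) (T : finType).

Definition islin (O : (T -> R) -> T -> R) :=
  forall k1 k2 f g, O (fun x => k1 * f x + k2 * g x) = fun x => k1 * O f x + k2 * O g x.

Lemma op_zero O : islin O -> O (fun _ => 0) = fun _ => 0.
Proof.
move=> H; have := H 0 0 (fun _ => 0) (fun _ => 0).
rewrite (_ : (fun _ : T => 0 * 0 + 0 * 0) = fun _ => 0); last first.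
  by apply/funext => x; rewrite mul0r addr0.
move=> ->; apply/funext => x; by rewrite !mul0r addr0.
Qed.

Lemma op_sum O : islin O -> forall (I : Type) (r : seq I) (a : I -> R) (F : I -> T -> R),
  O (fun x => \sum_(i <- r) a i * F i x) = fun x => \sum_(i <- r) a i * O (F i) x.
Proof.
move=> H I r a F; elim: r => [|i r IH].
  rewrite (_ : (fun x => \sum_(i <- [::]) a i * F i x) = fun _ => 0); last first.
    by apply/funext => x; rewrite big_nil.
  by rewrite op_zero //; apply/funext => x; rewrite big_nil.
have := H (a i) 1 (F i) (fun x => \sum_(i <- r) a i * F i x).
rewrite (_ : (fun x => a i * F i x + 1 * (\sum_(i0 <- r) a i0 * F i0 x)) =
   (fun x => \sum_(i0 <- i :: r) a i0 * F i0 x)); last first.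
  by apply/funext => x; rewrite big_cons mul1r.
move=> ->; rewrite IH; apply/funext => x; by rewrite big_cons mul1r.
Qed.

Lemma op_scale O : islin O -> forall k f, O (fun x => k * f x) = fun x => k * O f x.
Proof.
move=> H k f; have := H k 0 f f.
rewrite (_ : (fun x => k * f x + 0 * f x) = fun x => k * f x); last first.
  by apply/funext => x; rewrite mul0r addr0.
by move=> ->; apply/funext => x; rewrite mul0r addr0.
Qed.

Variables (A : (T -> R) -> T -> R) (c : R).
Hypotheses (c0 : 0 <= c) (Alin : islin A)
  (Apos : forall f, (forall x, 0 <= f x) -> forall x, 0 <= A f x + c * f x)
  (A1 : A (fun _ => 1) = fun _ => 0).

Definition Bop (f : T -> R) := fun x => A f x + c * f x.

Lemma Blin : islin Bop.
Proof.
move=> k1 k2 f g; rewrite /Bop Alin; apply/funext => x; ring.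
Qed.

Lemma iterB_lin j : islin (iter j Bop).
Proof.
elim: j => [|j IH] k1 k2 f g //=.
by rewrite IH Blin.
Qed.

Lemma iterB_mono j f g : (forall x, f x <= g x) -> forall x, iter j Bop f x <= iter j Bop g x.
Proof.
move=> fg; have -> : g = fun x => 1 * f x + 1 * (g x - f x).
  by apply/funext => x; rewrite !mul1r addrC subrK.
rewrite iterB_lin => x; rewrite !mul1r lerDl.
pose h := fun y => g y - f y.
have h0 : forall y, 0 <= h y by move=> y; rewrite /h subr_ge0.
rewrite -/h.
elim: j x => [|j IH] x /=; first exact: h0.
exact: (Apos IH x).
Qed.

Lemma iterB_const j K : iter j Bop (fun _ => K) = fun _ => K * c ^+ j.
Proof.
elim: j => [|j IH] /=; first by apply/funext => x; rewrite expr0 mulr1.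
rewrite IH /Bop.
have := op_scale Alin (K * c ^+ j) (fun _ => 1).
rewrite (_ : (fun _ : T => K * c ^+ j * 1) = fun _ => K * c ^+ j); last first.
  by apply/funext => x; rewrite mulr1.
move=> ->; rewrite A1; apply/funext => x; rewrite exprS; ring.
Qed.

Lemma iterB_bound j f K : (forall x, `|f x| <= K) -> forall x, `|iter j Bop f x| <= K * c ^+ j.
Proof.
move=> fK x; rewrite ler_norml; apply/andP; split.
  have := iterB_mono j (f := fun _ => - K) (g := f) _ x.
  rewrite iterB_const mulNr; apply => y.
  by move: (fK y); rewrite ler_norml => /andP[].
have := iterB_mono j (f := f) (g := fun _ => K) _ x.
rewrite iterB_const; apply => y; exact: le_trans (ler_norm _) (fK y).
Qed.

Lemma iterB_eig j V mu : (forall x, 0 <= V x) -> 0 <= mu ->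
  (forall x, Bop V x <= mu * V x) -> forall x, iter j Bop V x <= mu ^+ j * V x.
Proof.
move=> V0 mu0 HV; elim: j => [|j IH] x /=; first by rewrite expr0 mul1r.
apply: (@le_trans _ _ (Bop (fun y => mu ^+ j * V y) x)).
  exact: (iterB_mono 1 IH).
rewrite op_scale; last exact: Blin.
by rewrite exprSr -mulrA ler_wpM2l ?exprn_ge0.
Qed.


Lemma pascal (b : nat -> R) k :
  \sum_(j < k.+1) 'C(k, j)%:R * (- c) ^+ (k - j) * (b j.+1 - c * b j) =
  \sum_(j < k.+2) 'C(k.+1, j)%:R * (- c) ^+ (k.+1 - j) * b j.
Proof.
rewrite [RHS]big_ord_recl /= bin0 subn0.
have E1 : \sum_(i < k.+1) 'C(k.+1, lift ord0 i)%:R * (- c) ^+ (k.+1 - lift ord0 i) * b (lift ord0 i)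
  = \sum_(i < k.+1) 'C(k, i)%:R * (- c) ^+ (k - i) * b i.+1
  + \sum_(i < k.+1) 'C(k, i.+1)%:R * (- c) ^+ (k - i) * b i.+1.
  rewrite -big_split /=; apply: eq_bigr => i _.
  by rewrite /bump /= add1n binS subSS natrD; ring.
rewrite E1 addrCA.
have E2 : \sum_(j < k.+1) 'C(k, j)%:R * (- c) ^+ (k - j) * (b j.+1 - c * b j) =
  \sum_(j < k.+1) 'C(k, j)%:R * (- c) ^+ (k - j) * b j.+1 +
  \sum_(j < k.+1) 'C(k, j)%:R * ((- c) ^+ (k - j) * (- c)) * b j.
  rewrite -big_split /=; apply: eq_bigr => j _; ring.
rewrite E2; congr (_ + _).
rewrite big_ord_recl /= bin0 subn0 -exprSr.
rewrite [RHS]addrC big_ord_recr /= bin_small // mul0r mul0r addr0 addrC.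
congr (_ + _); apply: eq_bigr => i _; rewrite /bump /= add1n -exprSr subnSK //.
Qed.

Lemma AB g y : A g y = Bop g y - c * g y.
Proof. by rewrite /Bop addrK. Qed.

Lemma iterA_binom k f : iter k A f =
  fun x => \sum_(j < k.+1) ('C(k, j)%:R * (- c) ^+ (k - j)) * iter j Bop f x.
Proof.
elim: k => [|k IH] /=.
  by apply/funext => x; rewrite big_ord1 /= bin0 expr0 !mul1r.
rewrite IH (op_sum Alin); apply/funext => x.
rewrite -(pascal (fun j => iter j Bop f x)).
by apply: eq_bigr => j _; rewrite AB /=; ring.
Qed.

Variables (t : R).
Hypothesis t0 : 0 <= t.

Definition Useq f x := fun j => t ^+ j / j`!%:R * iter j Bop f x.
Definition U f x := limn (series (Useq f x)).

Lemma Useq_bound f x j : `|Useq f x j| <= (\sum_y `|f y|) * ecoef (c * t) j.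
Proof.
rewrite /Useq /ecoef normrM.
have -> : `|t ^+ j / j`!%:R| = t ^+ j / j`!%:R by rewrite ger0_norm // divr_ge0 ?exprn_ge0.
rewrite exprMn.
have H : `|iter j Bop f x| <= (\sum_y `|f y|) * c ^+ j.
  apply: iterB_bound => y.
  rewrite (bigD1 y) //= lerDl; exact: sumr_ge0.
have := ler_wpM2l (x := t ^+ j / j`!%:R) _ H.
rewrite divr_ge0 ?exprn_ge0 // => /(_ isT) /le_trans; apply.
by rewrite le_eqVlt; apply/orP; left; apply/eqP; ring.
Qed.

Lemma U_cvg f x : cvgn (series (Useq f x)).
Proof. apply: (@abs_cvg _ _ (c * t)); [exact: mulr_ge0 | exact: Useq_bound]. Qed.

Lemma limn_ecoef (a : R) : limn (series (ecoef a)) = expR a.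
Proof.
apply: cvg_lim => //.
have -> : series (ecoef a) = (fun n => \sum_(j < n) ecoef a j).
  by apply/funext => n; rewrite series_ord.
exact: ecoef_cvg.
Qed.

Lemma semigroup f x :
  (fun n => \sum_(0 <= k < n) (t ^+ k / k`!%:R * iter k A f x)) @ \oo -->
  U f x * expR (- (c * t)).
Proof.
rewrite -limn_ecoef /U.
have -> : (fun n => \sum_(0 <= k < n) (t ^+ k / k`!%:R * iter k A f x)) =
  (fun n => \sum_(k < n) \sum_(j < k.+1) Useq f x j * ecoef (- (c * t)) (k - j)%N).
  apply/funext => n; rewrite big_mkord; apply: eq_bigr => k _.
  rewrite iterA_binom mulr_sumr; apply: eq_bigr => j _.
  have jk : (j <= k)%N by rewrite -ltnS.
  have H := fact_binom R jk.
  rewrite /Useq /ecoef -mulNr exprMn.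
  have -> : t ^+ k = t ^+ j * t ^+ (k - j) by rewrite -exprD subnKC.
  transitivity (t ^+ j * t ^+ (k - j) * (- c) ^+ (k - j) * iter j Bop f x *
    ('C(k, j)%:R / k`!%:R)); first by ring.
  by rewrite H; ring.
apply: (@cauchy_prod _ _ _ (c * t) (c * t) (\sum_y `|f y|)).
- exact: mulr_ge0.
- exact: mulr_ge0.
- exact: Useq_bound.
- move=> m; rewrite /ecoef normrM normrX normrN.
  rewrite (ger0_norm (mulr_ge0 c0 t0)) normfV ger0_norm //.

Qed.


Lemma U_cvgto f x : series (Useq f x) @ \oo --> U f x.
Proof. exact: U_cvg. Qed.

Definition Uop f := fun x => U f x.

Lemma U_lin : islin Uop.
Proof.
move=> k1 k2 f g; apply/funext => x; rewrite /Uop /U.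
apply: cvg_lim => //.
have -> : series (Useq (fun x => k1 * f x + k2 * g x) x) =
   (fun n => k1 * series (Useq f x) n + k2 * series (Useq g x) n).
  apply/funext => n; rewrite !series_ord !mulr_sumr -big_split /=.
  apply: eq_bigr => j _; rewrite /Useq iterB_lin /=; ring.
apply: cvgD; apply: cvgMr; exact: U_cvgto.
Qed.

Lemma U_mono f g x : (forall y, f y <= g y) -> U f x <= U g x.
Proof.
move=> fg; apply: ler_lim; [exact: U_cvg | exact: U_cvg |].
apply: nearW => n; rewrite !series_ord; apply: ler_sum => j _.
rewrite /Useq ler_wpM2l ?divr_ge0 ?exprn_ge0 //; exact: iterB_mono.
Qed.

Lemma U_abs h x : `|U h x| <= U (fun y => `|h y|) x.
Proof.
rewrite ler_norml; apply/andP; split; last by apply: U_mono => y; exact: ler_norm.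
have -> : - U (fun y => `|h y|) x = U (fun y => (-1) * `|h y| + 0 * `|h y|) x.
  by have := U_lin (-1) 0 (fun y => `|h y|) (fun y => `|h y|) => /(congr1 (fun F => F x));
    rewrite /Uop /= => ->; ring.
apply: U_mono => y; rewrite mul0r addr0 mulN1r lerNl; by rewrite ler_normr lexx orbT.
Qed.

Lemma U_sum (I : Type) (r : seq I) (F : I -> T -> R) x :
  U (fun y => \sum_(i <- r) F i y) x = \sum_(i <- r) U (F i) x.
Proof.
have := op_sum U_lin r (fun _ => 1) F => /(congr1 (fun G => G x)); rewrite /Uop /=.
rewrite (_ : (fun x0 => \sum_(i <- r) 1 * F i x0) = fun y => \sum_(i <- r) F i y).
  by move=> ->; apply: eq_bigr => i _; rewrite mul1r.
by apply/funext => y; apply: eq_bigr => i _; rewrite mul1r.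
Qed.

Lemma U_eig V mu x : (forall y, 0 <= V y) -> 0 <= mu ->
  (forall y, Bop V y <= mu * V y) -> U V x <= expR (mu * t) * V x.
Proof.
move=> V0 mu0 HV.
have Hc : (fun n => series (ecoef (mu * t)) n * V x) @ \oo --> expR (mu * t) * V x.
  apply: cvgMl; rewrite -limn_ecoef.
  have := @is_cvg_series_exp_coeff R (mu * t); exact.
rewrite -(cvg_lim _ Hc) //.
apply: ler_lim; [exact: U_cvg | exact: cvgP Hc |].
apply: nearW => n; rewrite !series_ord mulr_suml; apply: ler_sum => j _.
rewrite /Useq /ecoef exprMn.
have := iterB_eig j V0 mu0 HV x.
move=> H; apply: (le_trans (ler_wpM2l _ H)); first by rewrite divr_ge0 ?exprn_ge0.
rewrite le_eqVlt; apply/orP; left; apply/eqP; ring.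
Qed.

End PartB.

Section PartC.
Variables (R : realType) (N : nat).

Lemma occE (eta : config N) (i : 'I_N.-1) : occ eta i.+1 = eta i.
Proof.
rewrite /occ /= (insubT (fun i => i < N.-1)%N (ltn_ord i)) /=.
by congr (eta _); apply: val_inj.
Qed.

Lemma ord_site (P : nat -> Prop) : (forall i : 'I_N.-1, P i.+1) ->
  forall s, (1 <= s)%N -> (s < N)%N -> P s.
Proof.
move=> H s s1 sN.
have si : (s.-1 < N.-1)%N by rewrite -ltnS prednK // (leq_trans sN) // leqSpred.
by have := H (Ordinal si); rewrite /= prednK.
Qed.

Lemma occ_swap (eta : config N) x s : (1 <= s)%N -> (s < N)%N ->
  occ (swap eta x) s = if s == x then occ eta x.+1 else if s == x.+1 then occ eta x
                       else occ eta s.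
Proof.
move: s; apply: ord_site => i.
by rewrite (occE (swap eta x) i) /swap ffunE (occE eta i).
Qed.

Lemma occ_flip (eta : config N) y s : (1 <= s)%N -> (s < N)%N ->
  occ (flip eta y) s = if s == y then ~~ occ eta s else occ eta s.
Proof.
move: s; apply: ord_site => i.
by rewrite (occE (flip eta y) i) (occE eta i) /flip ffunE.
Qed.


Variables (alpha beta : R).
Notation pair := (config N * config N)%type.

Definition rate (p : R) (b : bool) := 2^-1 * (p * (1 - b2R R b) + (1 - p) * b2R R b).

Definition bterm (p : R) (y : nat) (G : pair -> R) (q : pair) : R :=
  if occ q.1 y == occ q.2 y then rate p (occ q.1 y) * (G (flip q.1 y, flip q.2 y) - G q)
  else rate p (occ q.1 y) * (G (flip q.1 y, q.2) - G q)
     + rate p (occ q.2 y) * (G (q.1, flip q.2 y) - G q).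

Definition Lc (G : pair -> R) (q : pair) : R :=
  2^-1 * (\sum_(1 <= x < N.-1) (G (swap q.1 x, swap q.2 x) - G q))
  + bterm alpha 1 G q + bterm beta N.-1 G q.

Lemma Lc_marg1 g q : Lc (fun p => g p.1) q = genL alpha beta g q.1.
Proof.
rewrite /Lc /genL /bterm /=.
by case: ifP => _; case: ifP => _; rewrite /rate /= ?subrr ?mulr0 ?addr0.
Qed.

Lemma Lc_marg2 g q : Lc (fun p => g p.2) q = genL alpha beta g q.2.
Proof.
rewrite /Lc /genL /bterm /=.
by case: ifP => [/eqP ->|_]; case: ifP => [/eqP ->|_]; rewrite /rate /= ?subrr ?mulr0 ?add0r.
Qed.

Lemma Lc_lin : islin Lc.
Proof.
move=> k1 k2 f g; apply/funext => q; rewrite /Lc /bterm.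
set S := \sum_(_ <= _ < _) _.
have -> : S = k1 * (\sum_(1 <= x < N.-1) (f (swap q.1 x, swap q.2 x) - f q))
            + k2 * (\sum_(1 <= x < N.-1) (g (swap q.1 x, swap q.2 x) - g q)).
  rewrite /S !mulr_sumr -big_split /=; apply: eq_bigr => x _; ring.
by case: ifP => _; case: ifP => _; ring.
Qed.

Lemma Lc1 : Lc (fun _ => 1) = fun _ => 0.
Proof.
apply/funext => q; rewrite /Lc /bterm !subrr !mulr0 !addr0.
rewrite big1 ?mulr0 ?add0r //.
by case: ifP; case: ifP => _ _; rewrite ?addr0.
Qed.


Lemma rate_bnd p b : 0 <= p -> p <= 1 -> 0 <= rate p b /\ rate p b <= 2^-1.
Proof.
move=> p0 p1; rewrite /rate /b2R; case: b => /=; split; lra.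
Qed.

Lemma bterm_lb p y f q : 0 <= p -> p <= 1 -> (forall z, 0 <= f z) -> - f q <= bterm p y f q.
Proof.
move=> p0 p1 f0; rewrite /bterm; case: ifP => _.
  have [r0 r1] := rate_bnd (occ q.1 y) p0 p1.
  have := f0 (flip q.1 y, flip q.2 y); have := f0 q; nra.
have [r0 r1] := rate_bnd (occ q.1 y) p0 p1.
have [s0 s1] := rate_bnd (occ q.2 y) p0 p1.
have := f0 (flip q.1 y, q.2); have := f0 (q.1, flip q.2 y); have := f0 q; nra.
Qed.

Lemma Lc_pos : (2 <= N)%N -> 0 <= alpha -> alpha <= 1 -> 0 <= beta -> beta <= 1 ->
  forall f, (forall z, 0 <= f z) -> forall q, 0 <= Lc f q + N%:R * f q.
Proof.
move=> N2 a0 a1 b0 b1 f f0 q.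
have hS : - (f q *+ (N.-1 - 1)) <= \sum_(1 <= x < N.-1) (f (swap q.1 x, swap q.2 x) - f q).
  rewrite -sumr_const_nat -sumrN; apply: ler_sum => x _.
  by rewrite lerDr f0.
have hM : ((N.-1 - 1)%:R : R) + 4 <= 2 * N%:R.
  have : (N.-1 - 1 + 4 <= 2 * N)%N by lia.
  by rewrite -(ler_nat R) natrD natrM.
have h1 := bterm_lb 1 q a0 a1 f0.
have h2 := bterm_lb N.-1 q b0 b1 f0.
rewrite -mulr_natr in hS.
move: hS hM; set M := ((N.-1 - 1)%:R : R) => hS hM.
have hK : 0 <= 2 * N%:R - M - 4 by lra.
have := mulr_ge0 (f0 q) hK.
rewrite /Lc; lra.
Qed.

End PartC.

Section PartC2.
Variables (R : realType) (N : nat) (alpha beta : R).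
Notation pair := (config N * config N)%type.

Definition dd (q : pair) s : R := b2R R (occ q.1 s != occ q.2 s).
Definition Wt (s : nat) : R := (s * (N - s))%:R.
Definition Vf (q : pair) : R := \sum_(1 <= s < N) dd q s * Wt s.

Lemma sum_ind m n y (F : nat -> R) :
  \sum_(m <= s < n) (s == y)%:R * F s = ((m <= y)%N && (y < n)%N)%:R * F y.
Proof.
elim: n => [|n IH].
  by rewrite big_geq // ltn0 andbF mul0r.
case: (leqP m n) => mn.
  rewrite big_nat_recr //= IH.
  case: (eqVneq n y) => [<-|ny].
    by rewrite ltnn andbF mul0r add0r leqnn andbT mn /= mul1r.
  rewrite /= mul0r addr0; congr (_%:R * _); congr (nat_of_bool _).
  by rewrite ltnS (leq_eqVlt y n) (eq_sym y n) (negbTE ny).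
rewrite big_geq //; case: (leqP m y) => my /=; last by rewrite mul0r.
by rewrite ltnNge (leq_trans mn my) mul0r.
Qed.

Lemma dd_swap q x s : (1 <= s)%N -> (s < N)%N ->
  dd (swap q.1 x, swap q.2 x) s =
  if s == x then dd q x.+1 else if s == x.+1 then dd q x else dd q s.
Proof.
move=> s1 sN; rewrite /dd /= !occ_swap //.
by case: ifP => _ //; case: ifP.
Qed.

Lemma V_swap q x : (1 <= x)%N -> (x < N.-1)%N ->
  Vf (swap q.1 x, swap q.2 x) - Vf q = (dd q x - dd q x.+1) * (Wt x.+1 - Wt x).
Proof.
move=> x1 xN; rewrite /Vf -sumrB.
rewrite (@eq_big_nat _ _ _ 1 N _ (fun s => (s == x)%:R * ((dd q x.+1 - dd q x) * Wt s)
    + (s == x.+1)%:R * ((dd q x - dd q x.+1) * Wt s))); last first.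
  move=> s /andP[s1 sN]; rewrite dd_swap //.
  case: (eqVneq s x) => [->|sx].
    by rewrite (ltn_eqF (ltnSn x)) /=; ring.
  case: (eqVneq s x.+1) => [->|sx1] /=; first by ring.
  ring.
rewrite big_split /= (sum_ind 1 N x (fun s => (dd q x.+1 - dd q x) * Wt s)) (sum_ind 1 N x.+1 (fun s => (dd q x - dd q x.+1) * Wt s)).
have -> : ((1 <= x)%N && (x < N)%N) by apply/andP; split => //; lia.
have -> : ((1 <= x.+1)%N && (x.+1 < N)%N) by apply/andP; split => //; lia.
rewrite /=; ring.
Qed.

Lemma V_flip1 q y : (1 <= y)%N -> (y < N)%N -> occ q.1 y != occ q.2 y ->
  Vf (flip q.1 y, q.2) - Vf q = - Wt y.
Proof.
move=> y1 yN ne; rewrite /Vf -sumrB.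
rewrite (@eq_big_nat _ _ _ 1 N _ (fun s => (s == y)%:R * (- Wt s))); last first.
  move=> s /andP[s1 sN]; rewrite /dd /= occ_flip //.
  case: (eqVneq s y) => [->|sy] /=; last by rewrite subrr mul0r.
  move: ne; case: (occ q.1 y); case: (occ q.2 y) => //= _; rewrite /b2R /=; ring.
rewrite (sum_ind 1 N y (fun s => - Wt s)).
have -> : ((1 <= y)%N && (y < N)%N) by apply/andP; split.
by rewrite mul1r.
Qed.

Lemma V_flip2 q y : (1 <= y)%N -> (y < N)%N -> occ q.1 y != occ q.2 y ->
  Vf (q.1, flip q.2 y) - Vf q = - Wt y.
Proof.
move=> y1 yN ne; rewrite /Vf -sumrB.
rewrite (@eq_big_nat _ _ _ 1 N _ (fun s => (s == y)%:R * (- Wt s))); last first.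
  move=> s /andP[s1 sN]; rewrite /dd /= occ_flip //.
  case: (eqVneq s y) => [->|sy] /=; last by rewrite subrr mul0r.
  move: ne; case: (occ q.1 y); case: (occ q.2 y) => //= _; rewrite /b2R /=; ring.
rewrite (sum_ind 1 N y (fun s => - Wt s)).
have -> : ((1 <= y)%N && (y < N)%N) by apply/andP; split.
by rewrite mul1r.
Qed.

Lemma V_flip12 q y : (1 <= y)%N -> (y < N)%N ->
  Vf (flip q.1 y, flip q.2 y) - Vf q = 0.
Proof.
move=> y1 yN; rewrite /Vf -sumrB; apply: big1_seq => s /andP[_]; rewrite mem_index_iota => /andP[s1 sN].
rewrite /dd /= !occ_flip //; case: ifP => _; last by rewrite subrr.
by case: (occ q.1 s); case: (occ q.2 s); rewrite /= subrr.
Qed.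

Lemma rate_sum (p : R) b : rate p b + rate p (~~ b) = 2^-1.
Proof. rewrite /rate /b2R; case: b => /=; ring. Qed.

Lemma bterm_V p y q : (1 <= y)%N -> (y < N)%N ->
  bterm p y Vf q = - (2^-1 * (dd q y * Wt y)).
Proof.
move=> y1 yN; rewrite /bterm; case: ifP => [/eqP e|/negbT ne].
  by rewrite V_flip12 // mulr0 /dd e eqxx /b2R /= mul0r mulr0 oppr0.
rewrite V_flip1 // V_flip2 //.
have -> : occ q.2 y = ~~ occ q.1 y by move: ne; case: (occ q.1 y); case: (occ q.2 y).
have := rate_sum p (occ q.1 y).
rewrite /dd; move: ne; case: (occ q.1 y); case: (occ q.2 y) => //= _;
  rewrite /b2R /= => H; rewrite -[in RHS]H; ring.
Qed.


Lemma sbp (d Wf : nat -> R) n : (1 <= n)%N -> Wf 0%N = 0 ->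
  \sum_(1 <= x < n) (d x - d x.+1) * (Wf x.+1 - Wf x) - d 1%N * Wf 1%N - d n * Wf n
  + d n * Wf n.+1 = \sum_(1 <= x < n.+1) d x * (Wf x.+1 + Wf x.-1 - 2 * Wf x).
Proof.
move=> n1 W0; elim: n n1 => [//|n IH] _.
case: (posnP n) => [->|n0].
  rewrite big_geq // big_nat1 /= W0; ring.
rewrite big_nat_recr //= [in RHS]big_nat_recr //=.
have := IH n0 => <-; ring.
Qed.

Lemma Wt_R s : (s <= N)%N -> Wt s = s%:R * (N%:R - s%:R).
Proof. by move=> sN; rewrite /Wt natrM natrB. Qed.

Lemma Wt_lap x : (1 <= x)%N -> (x < N)%N -> Wt x.+1 + Wt x.-1 - 2 * Wt x = -2.
Proof.
move=> x1 xN.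
rewrite !Wt_R //; [|lia|lia].
have -> : (x.-1%:R : R) = x%:R - 1 by rewrite -{2}(prednK x1) -natr1; ring.
rewrite -natr1; ring.
Qed.

Lemma Lc_V q : (2 <= N)%N -> Lc alpha beta Vf q = - \sum_(1 <= s < N) dd q s.
Proof.
move=> N2; rewrite /Lc.
rewrite (@eq_big_nat _ _ _ 1 N.-1 _ (fun x => (dd q x - dd q x.+1) * (Wt x.+1 - Wt x)));
  last by move=> x /andP[x1 xN]; rewrite V_swap.
rewrite !bterm_V //; [ | lia | lia].
have hN1 : (1 <= N.-1)%N by lia.
have hW0 : Wt 0%N = 0 by rewrite /Wt mul0n.
have := @sbp (dd q) Wt N.-1 hN1 hW0.
rewrite (_ : N.-1.+1 = N); last lia.
rewrite (_ : Wt N = 0); last by rewrite /Wt subnn muln0.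
rewrite mulr0 addr0.
rewrite (@eq_big_nat _ _ _ 1 N _ (fun x => dd q x * (-2))); last first.
  by move=> x /andP[x1 xN]; rewrite Wt_lap.
rewrite -mulr_suml => H.
have -> : \sum_(1 <= x < N.-1) (dd q x - dd q x.+1) * (Wt x.+1 - Wt x) =
  (\sum_(1 <= i < N) dd q i) * -2 + dd q 1%N * Wt 1%N + dd q N.-1 * Wt N.-1.
  by rewrite -H; ring.
by field.
Qed.


Lemma dd01 q s : 0 <= dd q s /\ dd q s <= 1.
Proof. by rewrite /dd /b2R; case: (_ != _) => /=; split. Qed.

Lemma Wt_ge0 s : 0 <= Wt s.
Proof. by rewrite /Wt ler0n. Qed.

Lemma Wt_le s : (s <= N)%N -> 4 * Wt s <= N%:R ^+ 2.
Proof. move=> sN; rewrite Wt_R //; have := sqr_ge0 (N%:R - 2 * s%:R : R); nra. Qed.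

Lemma Vf_ge0 q : 0 <= Vf q.
Proof.
rewrite /Vf; apply: sumr_ge0 => s _; apply: mulr_ge0; [exact: (dd01 q s).1 | exact: Wt_ge0].
Qed.

Lemma Lc_V_le q : (2 <= N)%N ->
  Lc alpha beta Vf q <= - (4 / N%:R ^+ 2) * Vf q.
Proof.
move=> N2; rewrite Lc_V // mulNr lerN2 /Vf mulr_sumr.
apply: ler_sum_nat => s /andP[s1 sN].
have [d0 d1] := dd01 q s.
have hW := Wt_le (ltnW sN).
have hN : 0 < N%:R ^+ 2 :> R by rewrite exprn_gt0 // ltr0n; lia.
have -> : 4 / N%:R ^+ 2 * (dd q s * Wt s) = dd q s * ((4 * Wt s) / N%:R ^+ 2).
  by ring.
rewrite -[leRHS]mulr1; apply: ler_wpM2l => //.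
by rewrite ler_pdivrMr // mul1r.
Qed.

Lemma Vf_le q : Vf q <= N.-1%:R * (N%:R ^+ 2 / 4).
Proof.
rewrite /Vf.
apply: (@le_trans _ _ (\sum_(1 <= s < N) (N%:R ^+ 2 / 4 : R))).
  apply: ler_sum_nat => s /andP[s1 sN].
  have [d0 d1] := dd01 q s.
  have hW := Wt_le (ltnW sN).
  have := Wt_ge0 s; nra.
by rewrite sumr_const_nat subn1 mulr_natl.
Qed.

Lemma Vf_off q : q.1 != q.2 -> N.-1%:R <= Vf q.
Proof.
move=> ne.
have /existsP [i Hi] : [exists i, q.1 i != q.2 i].
  rewrite -negb_forall; apply/negP => /forallP H; move/negP: ne; apply.
  by apply/eqP/ffunP => i; apply/eqP; exact: H i.
rewrite /Vf big_add1 /= big_mkord (bigD1 i) //=.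
have -> : dd q i.+1 = 1 by rewrite /dd !occE Hi.
rewrite mul1r; apply: ler_wpDr.
  apply: sumr_ge0 => j _; apply: mulr_ge0; [exact: (dd01 q _).1 | exact: Wt_ge0].
rewrite /Wt ler_nat.
have := ltn_ord i; nia.
Qed.

End PartC2.

Section PartD.
Variables (R : realType) (N : nat) (alpha beta : R) (nu : config N -> R).
Hypotheses (N2 : (2 <= N)%N) (a0 : 0 < alpha) (ab : alpha <= beta) (b1 : beta < 1)
  (st : stationary alpha beta nu).
Notation pair := (config N * config N)%type.
Notation A := (@Lc R N alpha beta).
Notation c := (N%:R : R).

Let c0 : 0 <= c. Proof. exact: ler0n. Qed.
Let Alin : islin A. Proof. exact: Lc_lin. Qed.
Let Apos : forall f : pair -> R, (forall x, 0 <= f x) -> forall x, 0 <= A f x + c * f x.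
Proof.
apply: Lc_pos => //; [exact: ltW a0 | exact: le_trans ab (ltW b1) | exact: le_trans (ltW a0) ab | exact: ltW b1].
Qed.
Let A1 : A (fun _ => 1) = fun _ => 0. Proof. exact: Lc1. Qed.

Lemma iter_marg1 k g : iter k A (fun p : pair => g p.1) = fun p => iter k (genL alpha beta) g p.1.
Proof.
elim: k => [//|k IH] /=; rewrite IH; apply/funext => q; exact: Lc_marg1.
Qed.

Lemma iter_marg2 k g : iter k A (fun p : pair => g p.2) = fun p => iter k (genL alpha beta) g p.2.
Proof.
elim: k => [//|k IH] /=; rewrite IH; apply/funext => q; exact: Lc_marg2.
Qed.

Variable t : R.
Hypothesis t0 : 0 <= t.

Notation UU := (U A c t).

Lemma Pt_U1 eta zeta xi :
  Pt alpha beta t eta xi = UU (fun p : pair => Defs.indic R xi p.1) (eta, zeta) * expR (- (c * t)).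
Proof.
have E : (fun n => \sum_(0 <= k < n) (t ^+ k / k`!%:R * iter k (genL alpha beta) (Defs.indic R xi) eta))
  = (fun n => \sum_(0 <= k < n) (t ^+ k / k`!%:R * iter k A (fun p : pair => Defs.indic R xi p.1) (eta, zeta))).
  by apply/funext => n; apply: eq_bigr => k _; rewrite iter_marg1.
rewrite /Pt E; apply: cvg_lim => //.
exact: (semigroup c0 Alin Apos A1 t0 (f := fun p : pair => Defs.indic R xi p.1) (x := (eta, zeta))).
Qed.

Lemma Pt_U2 eta zeta xi :
  Pt alpha beta t zeta xi = UU (fun p : pair => Defs.indic R xi p.2) (eta, zeta) * expR (- (c * t)).
Proof.
have E : (fun n => \sum_(0 <= k < n) (t ^+ k / k`!%:R * iter k (genL alpha beta) (Defs.indic R xi) zeta))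
  = (fun n => \sum_(0 <= k < n) (t ^+ k / k`!%:R * iter k A (fun p : pair => Defs.indic R xi p.2) (eta, zeta))).
  by apply/funext => n; apply: eq_bigr => k _; rewrite iter_marg2.
rewrite /Pt E; apply: cvg_lim => //.
exact: (semigroup c0 Alin Apos A1 t0 (f := fun p : pair => Defs.indic R xi p.2) (x := (eta, zeta))).
Qed.


Definition Sseq (zeta xi : config N) n :=
  \sum_(0 <= k < n) (t ^+ k / k`!%:R * iter k (genL alpha beta) (Defs.indic R xi) zeta).

Lemma Pt_cvg zeta xi : Sseq zeta xi @ \oo --> Pt alpha beta t zeta xi.
Proof.
rewrite (Pt_U2 zeta).
have E : Sseq zeta xi
  = (fun n => \sum_(0 <= k < n) (t ^+ k / k`!%:R * iter k A (fun p : pair => Defs.indic R xi p.2) (zeta, zeta))).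
  by apply/funext => n; apply: eq_bigr => k _; rewrite iter_marg2.
rewrite E.
exact: (semigroup c0 Alin Apos A1 t0 (f := fun p : pair => Defs.indic R xi p.2) (x := (zeta, zeta))).
Qed.

Lemma sum_indic (F : config N -> R) xi : \sum_zeta F zeta * Defs.indic R xi zeta = F xi.
Proof.
rewrite (bigD1 xi) //= /Defs.indic /b2R eqxx mulr1 big1 ?addr0 // => z zx.
by rewrite (negbTE zx) mulr0.
Qed.

Lemma nu_stat xi : \sum_zeta nu zeta * Pt alpha beta t zeta xi = nu xi.
Proof.
case: st => nu0 nu1 nuL.
have H : (fun n => \sum_zeta nu zeta * Sseq zeta xi n) @ \oo -->
   \sum_zeta nu zeta * Pt alpha beta t zeta xi.
  apply: cvg_bigsum => zeta; apply: cvgMr; exact: Pt_cvg.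
rewrite -(cvg_lim _ H) //.
apply: lim_near_cst => //; near=> n.
have n0 : (0 < n)%N by near: n; exists 1%N.
rewrite /Sseq.
under eq_bigr do rewrite mulr_sumr.
rewrite exchange_big /= big_ltn //.
rewrite [X in _ + X](_ : _ = 0); last first.
  apply: big1_seq => k /andP[_]; rewrite mem_index_iota => /andP[k1 _].
  have -> : k = k.-1.+1 by rewrite prednK.
  under eq_bigr do rewrite mulrCA.
  by rewrite -mulr_sumr /= nuL mulr0.
rewrite addr0.
under eq_bigr do rewrite expr0 fact0 divr1 mul1r.
exact: sum_indic.
Unshelve. all: by end_near.
Qed.


Lemma sum_indic2 (x : config N) : \sum_xi Defs.indic R xi x = 1.
Proof.
rewrite (bigD1 x) //= /Defs.indic /b2R eqxx big1 ?addr0 // => z zx.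
by rewrite eq_sym (negbTE zx).
Qed.

Lemma indic_ge0 (xi x : config N) : 0 <= Defs.indic R xi x.
Proof. by rewrite /Defs.indic /b2R ler0n. Qed.

Let N1 : 0 < N.-1%:R :> R.
Proof. rewrite ltr0n; lia. Qed.

Lemma hsum_le (p : pair) :
  \sum_xi `|Defs.indic R xi p.1 - Defs.indic R xi p.2| <= (2 / N.-1%:R) * Vf R p.
Proof.
case: (eqVneq p.1 p.2) => [e|ne].
  rewrite e big1 => [|xi _]; last by rewrite subrr normr0.
  apply: mulr_ge0; last exact: (Vf_ge0 R p). by apply: divr_ge0 => //; exact: ltW.
apply: (@le_trans _ _ (\sum_xi (Defs.indic R xi p.1 + Defs.indic R xi p.2))).
  apply: ler_sum => xi _; apply: (le_trans (ler_normB _ _)).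
  by rewrite !ger0_norm ?indic_ge0.
rewrite big_split /= !sum_indic2.
have := Vf_off R ne.
move: (Vf R p) => v hv.
have h2 : 0 <= 2 / N.-1%:R :> R by apply: divr_ge0 => //; exact: ltW.
apply: le_trans (ler_wpM2l h2 hv).
rewrite divfK ?lt0r_neq0 //; lra.
Qed.


Definition mu : R := c - 4 / c ^+ 2.

Lemma c2 : 2 <= c.
Proof. by rewrite (ler_nat R 2 N). Qed.

Lemma mu_ge0 : 0 <= mu.
Proof.
have hc := c2.
have hc2 : 0 < c ^+ 2 by rewrite exprn_gt0 //; lra.
have : 4 / c ^+ 2 <= 1 by rewrite ler_pdivrMr // mul1r; nra.
rewrite /mu; lra.
Qed.

Lemma BV_le (y : pair) : Bop A c (@Vf R N) y <= mu * Vf R y.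
Proof.
rewrite /Bop /mu; have := @Lc_V_le R N alpha beta y N2; lra.
Qed.

Lemma pair_bound (eta zeta : config N) :
  \sum_xi `|Pt alpha beta t eta xi - Pt alpha beta t zeta xi| <=
  expR (- (c * t)) * expR (mu * t) * (c ^+ 2 / 2).
Proof.
pose q : pair := (eta, zeta).
pose e := expR (- (c * t)).
have e0 : 0 < e := expR_gt0 _.
have H xi : Pt alpha beta t eta xi - Pt alpha beta t zeta xi =
   UU (fun p => 1 * Defs.indic R xi p.1 + (-1) * Defs.indic R xi p.2) q * e.
  rewrite (Pt_U1 eta zeta) (Pt_U2 eta zeta).
  have := U_lin c0 Alin Apos A1 t0 1 (-1) (fun p : pair => Defs.indic R xi p.1)
    (fun p : pair => Defs.indic R xi p.2) => /(congr1 (fun F => F q)); rewrite /Uop /= => ->.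
  rewrite /e /q; ring.
under eq_bigr do rewrite H normrM (gtr0_norm e0).
rewrite -mulr_suml.
apply: (@le_trans _ _
  (UU (fun p => \sum_xi `|1 * Defs.indic R xi p.1 + (-1) * Defs.indic R xi p.2|) q * e)).
  rewrite (ler_pM2r e0) (U_sum c0 Alin Apos A1 t0).
  apply: ler_sum => xi _; exact: U_abs.
apply: (@le_trans _ _ (UU (fun p => (2 / N.-1%:R) * Vf R p) q * e)).
  rewrite (ler_pM2r e0); apply: (U_mono c0 Alin Apos A1 t0) => p.
  under eq_bigr do rewrite mul1r mulN1r.
  exact: hsum_le.
have := op_scale (U_lin c0 Alin Apos A1 t0) (2 / N.-1%:R) (@Vf R N)
  => /(congr1 (fun F => F q)); rewrite /Uop /= => ->.
have Ue := U_eig c0 Alin Apos A1 t0 q (@Vf_ge0 R N) mu_ge0 BV_le.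
have hV := Vf_le R q.
have E0 : 0 < expR (mu * t) := expR_gt0 _.
have h2 : 0 <= 2 / N.-1%:R :> R by apply: divr_ge0 => //; exact: ltW.
have L := ler_wpM2r (ltW e0) (ler_wpM2l h2 (le_trans Ue (ler_wpM2l (ltW E0) hV))).
apply: (le_trans L).
rewrite le_eqVlt; apply/orP; left; apply/eqP.
rewrite /e; field; exact: lt0r_neq0.
Qed.

Lemma tv_bound (eta : config N) :
  tv_dist (Pt alpha beta t eta) nu <= expR (- (c * t)) * expR (mu * t) * (c ^+ 2 / 4).
Proof.
case: st => nu0 nu1 nuL.
set K := expR (- (c * t)) * expR (mu * t) * (c ^+ 2 / 2).
have -> : expR (- (c * t)) * expR (mu * t) * (c ^+ 2 / 4) = 2^-1 * K.
  by rewrite /K; field.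
rewrite /tv_dist; apply: ler_wpM2l => //.
have E xi : Pt alpha beta t eta xi - nu xi =
    \sum_zeta nu zeta * (Pt alpha beta t eta xi - Pt alpha beta t zeta xi).
  rewrite (eq_bigr (fun z => nu z * Pt alpha beta t eta xi - nu z * Pt alpha beta t z xi));
    last by move=> z _; rewrite mulrBr.
  by rewrite sumrB -mulr_suml nu1 mul1r nu_stat.
apply: (@le_trans _ _ (\sum_xi \sum_zeta nu zeta *
      `|Pt alpha beta t eta xi - Pt alpha beta t zeta xi|)).
  apply: ler_sum => xi _; rewrite E; apply: (le_trans (ler_norm_sum _ _ _)).
  by apply: ler_sum => zeta _; rewrite normrM ger0_norm.
rewrite exchange_big /=.
apply: (@le_trans _ _ (\sum_zeta nu zeta * K)); last by rewrite -mulr_suml nu1 mul1r.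
apply: ler_sum => zeta _; rewrite -mulr_sumr; apply: ler_wpM2l => //.
exact: pair_bound.
Qed.

End PartD.

Lemma final_num (R : realType) (N : nat) : (2 <= N)%N ->
  expR (- ((N%:R : R) * (2^-1 * N%:R ^+ 3))) * expR (mu R N * (2^-1 * N%:R ^+ 3))
   * ((N%:R : R) ^+ 2 / 4) <= 4^-1.
Proof.
move=> N2.
set c : R := N%:R.
have hc : 2 <= c by rewrite /c (ler_nat R 2 N).
rewrite -expRD.
have -> : - (c * (2^-1 * c ^+ 3)) + mu R N * (2^-1 * c ^+ 3) = - (2 * c).
  rewrite /mu -/c; field; apply: lt0r_neq0; lra.
rewrite expRN.
have e1 := expR_ge1Dx c.
have -> : expR (2 * c) = expR c * expR c by rewrite -expRD; congr expR; ring.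
have ep : 0 < expR c := expR_gt0 c.
have h : c ^+ 2 <= expR c * expR c by nra.
have hp : 0 < expR c * expR c by exact: mulr_gt0.
move: h hp; set E := expR c * expR c => h hp.
rewrite mulrA -[leRHS]mul1r ler_pM2r; last by rewrite invr_gt0; lra.
by rewrite mulrC ler_pdivrMr // mul1r.
Qed.

End Helpers.
Import Helpers.

Theorem mainTheorem11 (R : realType) (N : nat) (alpha beta : R)
  (nu : config N -> R) :
  (2 <= N)%N -> 0 < alpha -> alpha <= beta -> beta < 1 ->
  stationary alpha beta nu ->
  Tmix_set alpha beta nu !=set0 /\
  Tmix alpha beta nu <= 2^-1 * (N%:R) ^+ 3.
Proof.
move=> N2 a0 ab b1 st.
set t1 : R := 2^-1 * N%:R ^+ 3.
have hc : (2 : R) <= N%:R by rewrite (ler_nat R 2 N).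
have t10 : 0 < t1 by rewrite /t1; apply: mulr_gt0; [lra | apply: exprn_gt0; lra].
have Hin : Tmix_set alpha beta nu t1.
  split => //; rewrite /max_tv.
  elim/big_ind: _ => //.
  - by move=> x y hx hy; rewrite ge_max hx hy.
  - move=> eta _; apply: le_trans (tv_bound N2 a0 ab b1 st (ltW t10) eta) _.
    exact: final_num.
split; first by exists t1.
have lb : has_lbound (Tmix_set alpha beta nu) by exists 0 => y [y0 _]; exact: ltW.
exact: (ge_inf lb Hin).
Qed.
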